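(* Let $\phi$ be an LTL formula. (f) Every finite chain of $\mathbf{AX}^{gen}$-atoms of $\phi$ is extensible (i.e., is a prefix of) an acceptable chain of $\mathbf{AX}^{gen}$-atoms, finite or infinite. (g) Every finite chain of $\mathbf{AX}^{inf}$-atoms of $\phi$ is extensible to an infinite acceptable chain of $\mathbf{AX}^{inf}$-atoms. (h) Every finite chain of $\mathbf{AX}^{fin}$-atoms of $\phi$ is extensible to a finite acceptable chain of $\mathbf{AX}^{fin}$-atoms.
   Context: LTL formulas: grammar $\phi ::= p\mid\neg\phi\mid\phi\wedge\psi\mid\bigcirc\phi\mid\phi\,\mathcal{U}\,\psi$ over propositions $p\in\Phi_0$; $\vee,\Rightarrow$ standard abbreviations; $\mathit{true}$ a fixed tautology, $\mathit{false}:=\neg\mathit{true}$, $\Diamond\phi:=\mathit{true}\,\mathcal{U}\,\phi$, $\overline{\bigcirc}\phi:=\neg\bigcirc\neg\phi$. Axiomatizations: $\mathbf{AX}^{gen}$ consists of Prop (all propositional tautology instances), MP (from $\phi$, $\phi\Rightarrow\psi$ infer $\psi$), T1: $\bigcirc\phi\wedge\bigcirc(\phi\Rightarrow\psi)\Rightarrow\bigcirc\psi$, T2': $\phi\,\mathcal{U}\,\psi\Leftrightarrow\psi\vee(\phi\wedge\overline{\bigcirc}(\phi\,\mathcal{U}\,\psi))$, T3': $\bigcirc\phi\Leftrightarrow(\bigcirc\mathit{false}\vee\overline{\bigcirc}\phi)$, RT1 (from $\phi$ infer $\bigcirc\phi$), RT2 (from $\phi'\Rightarrow\neg\psi\wedge\bigcirc\phi'$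 infer $\phi'\Rightarrow\neg(\phi\,\mathcal{U}\,\psi)$). $\mathbf{AX}^{inf}$ adds $\neg\bigcirc\mathit{false}$; $\mathbf{AX}^{fin}$ adds $\Diamond\bigcirc\mathit{false}$. For an axiomatization $ax$, a formula is $ax$-consistent if its negation is not provable in $ax$; a finite set is consistent if its conjunction is. Closure: $Cl'(\phi)$ is the smallest set $S$ with $\phi\in S$; $\mathit{true}\,\mathcal{U}\,\bigcirc\mathit{false}\in S$; $\neg\psi\in S\Rightarrow\psi\in S$; $\psi_1\wedge\psi_2\in S\Rightarrow\psi_1,\psi_2\in S$; $\bigcirc\psi\in S\Rightarrow\psi\in S$; $\bigcirc\neg\psi\in S\Rightarrow\bigcirc\psi\in S$; $\psi_1\,\mathcal{U}\,\psi_2\in S\Rightarrow\psi_1,\psi_2,\overline{\bigcirc}(\psi_1\,\mathcal{U}\,\psi_2)\in S$. $Cl(\phi)=Cl'(\phi)\cup\{\neg\psi:\psi\in Cl'(\phi)\}$. An $ax$-atom of $\phi$ is a maximal $ax$-consistent subset of $Cl(\phi)$; $\widehat V$ is the conjunction of its formulas. $V\to_{ax}W$ iff $\widehat V\wedge\overline{\bigcirc}\widehat W$ is $ax$-consistent. A chain of $ax$-atoms is a finite or infinite sequence $V_0,V_1,\dots$ with $V_i\to_{ax}V_{i+1}$ for consecutive indices. A chain is acceptable if for every index $i$ and every $\psi_1\,\mathcal{U}\,\psi_2\in V_i$ there is an index $j\ge i$ of the chain with $\psi_2\in V_j$ and $\psi_1\in V_i,\dots,V_{j-1}$. *)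

(* Defs.v *)
From Stdlib Require Import List Arith.
Import ListNotations.

Inductive form : Type :=
| Var : nat -> form
| Neg : form -> form
| And : form -> form -> form
| Next : form -> form
| Until : form -> form -> form.

Definition Or (a b : form) : form := Neg (And (Neg a) (Neg b)).
Definition Imp (a b : form) : form := Or (Neg a) b.
Definition Iff (a b : form) : form := And (Imp a b) (Imp b a).
Definition ftrue : form := Neg (And (Var 0) (Neg (Var 0))).
Definition ffalse : form := Neg ftrue.
Definition Ev (a : form) : form := Until ftrue a.
Definition WNext (a : form) : form := Neg (Next (Neg a)).

(* Propositional valuation treating propositions, Next- and Until-formulas
   as atoms; a formula is an instance of a propositional tautology iff it is
   true under every such valuation. *)
Fixpoint pval (v : form -> bool) (f : form) : bool :=
  match f with
  | Neg a => negb (pval v a)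
  | And a b => pval v a && pval v b
  | _ => v f
  end.

Definition taut_instance (f : form) : Prop := forall v, pval v f = true.

(* Provability in AX^gen extended with the extra axioms [ext]. *)
Inductive prov (ext : form -> Prop) : form -> Prop :=
| Ax_Prop f : taut_instance f -> prov ext f
| Ax_Ext f : ext f -> prov ext f
| R_MP a b : prov ext a -> prov ext (Imp a b) -> prov ext b
| Ax_T1 a b : prov ext (Imp (And (Next a) (Next (Imp a b))) (Next b))
| Ax_T2' a b : prov ext (Iff (Until a b) (Or b (And a (WNext (Until a b)))))
| Ax_T3' a : prov ext (Iff (Next a) (Or (Next ffalse) (WNext a)))
| R_RT1 a : prov ext a -> prov ext (Next a)
| R_RT2 a b c : prov ext (Imp c (And (Neg b) (Next c))) ->
                prov ext (Imp c (Neg (Until a b))).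

Definition ext_gen : form -> Prop := fun _ => False.
Definition ext_inf : form -> Prop := fun f => f = Neg (Next ffalse).
Definition ext_fin : form -> Prop := fun f => f = Ev (Next ffalse).

Definition consistent (ext : form -> Prop) (f : form) : Prop :=
  ~ prov ext (Neg f).

Definition conj (l : list form) : form := fold_right And ftrue l.

Inductive clp (phi : form) : form -> Prop :=
| Cl_self : clp phi phi
| Cl_fin : clp phi (Until ftrue (Next ffalse))
| Cl_neg a : clp phi (Neg a) -> clp phi a
| Cl_and1 a b : clp phi (And a b) -> clp phi a
| Cl_and2 a b : clp phi (And a b) -> clp phi b
| Cl_next a : clp phi (Next a) -> clp phi a
| Cl_nextneg a : clp phi (Next (Neg a)) -> clp phi (Next a)
| Cl_until1 a b : clp phi (Until a b) -> clp phi a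
| Cl_until2 a b : clp phi (Until a b) -> clp phi b
| Cl_until3 a b : clp phi (Until a b) -> clp phi (WNext (Until a b)).

Definition cl (phi psi : form) : Prop :=
  clp phi psi \/ exists chi, clp phi chi /\ psi = Neg chi.

(* An ax-atom of phi: a maximal ax-consistent subset of Cl(phi)
   (finite sets represented by lists, membership = In). *)
Definition atom (ext : form -> Prop) (phi : form) (V : list form) : Prop :=
  (forall psi, In psi V -> cl phi psi) /\
  consistent ext (conj V) /\
  (forall W : list form, incl V W -> (forall psi, In psi W -> cl phi psi) ->
     consistent ext (conj W) -> incl W V).

Definition arrow (ext : form -> Prop) (V W : list form) : Prop :=
  consistent ext (And (conj V) (WNext (conj W))).

Definition fchain (ext : form -> Prop) (phi : form) (c : list (list form)) : Prop :=
  (forall i, i < length c -> atom ext phi (nth i c [])) /\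
  (forall i, S i < length c -> arrow ext (nth i c []) (nth (S i) c [])).

Definition ichain (ext : form -> Prop) (phi : form) (s : nat -> list form) : Prop :=
  forall i, atom ext phi (s i) /\ arrow ext (s i) (s (S i)).

Definition facceptable (c : list (list form)) : Prop :=
  forall i a b, i < length c -> In (Until a b) (nth i c []) ->
    exists j, i <= j /\ j < length c /\ In b (nth j c []) /\
      (forall k, i <= k -> k < j -> In a (nth k c [])).

Definition iacceptable (s : nat -> list form) : Prop :=
  forall i a b, In (Until a b) (s i) ->
    exists j, i <= j /\ In b (s j) /\
      (forall k, i <= k -> k < j -> In a (s k)).

Definition fprefix (c d : list (list form)) : Prop := exists e, d = c ++ e.
Definition iprefix (c : list (list form)) (s : nat -> list form) : Prop :=
  forall i, i < length c -> s i = nth i c [].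

(* Main.v *)
Require Import Defs.
From Stdlib Require Import List Arith Lia Bool Classical ClassicalEpsilon.
Import ListNotations.

Definition disj (l : list form) : form := fold_right Or ffalse l.

Lemma pval_ftrue v : pval v ftrue = true.
Proof. simpl; destruct (v (Var 0)); reflexivity. Qed.
Lemma pval_ffalse v : pval v ffalse = false.
Proof. simpl; destruct (v (Var 0)); reflexivity. Qed.
Lemma pval_Imp v a b : pval v (Imp a b) = implb (pval v a) (pval v b).
Proof. simpl; destruct (pval v a), (pval v b); reflexivity. Qed.
Lemma pval_Or v a b : pval v (Or a b) = orb (pval v a) (pval v b).
Proof. simpl; destruct (pval v a), (pval v b); reflexivity. Qed.
Lemma pval_Iff v a b : pval v (Iff a b) = Bool.eqb (pval v a) (pval v b).
Proof. unfold Iff; simpl; destruct (pval v a), (pval v b); reflexivity. Qed.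
Lemma pval_Neg v a : pval v (Neg a) = negb (pval v a).
Proof. reflexivity. Qed.
Lemma pval_And v a b : pval v (And a b) = pval v a && pval v b.
Proof. reflexivity. Qed.
Lemma pval_WNext v a : pval v (WNext a) = negb (v (Next (Neg a))).
Proof. reflexivity. Qed.
Lemma pval_conj v l : pval v (conj l) = true <-> forall x, In x l -> pval v x = true.
Proof.
  induction l; unfold conj in *; cbn [fold_right In] in *.
  - split; [tauto| intros; apply pval_ftrue].
  - rewrite pval_And, andb_true_iff, IHl. firstorder congruence.
Qed.
Lemma pval_disj v l : pval v (disj l) = true <-> exists x, In x l /\ pval v x = true.
Proof.
  induction l; unfold disj in *; cbn [fold_right In] in *.
  - rewrite pval_ffalse. split; [discriminate| intros [x [[] _]]].
  - rewrite pval_Or, orb_true_iff, IHl. firstorder (subst; auto).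
Qed.

Lemma PC ext hs c :
  (forall h, In h hs -> prov ext h) ->
  (forall v, (forall h, In h hs -> pval v h = true) -> pval v c = true) ->
  prov ext c.
Proof.
  revert c; induction hs as [|h hs IH]; intros c Hp Hv.
  - apply Ax_Prop. intro v. apply Hv. simpl; tauto.
  - apply R_MP with h. apply Hp; simpl; auto.
    apply IH. intros; apply Hp; simpl; auto.
    intros v Hh. rewrite pval_Imp. destruct (pval v h) eqn:E; simpl; auto.
    apply Hv. intros h' [<-|Hi]; auto.
Qed.

Ltac pv := repeat (rewrite ?pval_Imp, ?pval_Or, ?pval_Iff, ?pval_Neg, ?pval_And, ?pval_WNext, ?pval_ftrue, ?pval_ffalse in *).

Ltac pc hs :=
  apply (PC _ hs); [ let h := fresh in let Hi := fresh in intros h Hi; simpl in Hi;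
     repeat (destruct Hi as [Hi|Hi]; [subst h; assumption|]); destruct Hi
  | let v := fresh "v" in let H := fresh in intros v H; cbn [In] in H;
    repeat match goal with H : forall h, _ = h \/ _ -> _ |- _ =>
        let H1 := fresh in pose proof (H _ (or_introl eq_refl)) as H1;
        specialize (fun h Hh => H h (or_intror Hh)) end; pv; cbn [pval] in * ].

Lemma K1 ext x y : prov ext (Imp x y) -> prov ext (Imp (Next x) (Next y)).
Proof.
  intro H. pose proof (R_RT1 _ _ H) as H1. pose proof (Ax_T1 ext x y) as H2.
  pc [Next (Imp x y); Imp (And (Next x) (Next (Imp x y))) (Next y)].
  destruct (v (Next x)), (v (Next y)), (v (Next (Imp x y))); simpl in *; congruence.
Qed.

Lemma K2 ext x y : prov ext (Imp (And (Next x) (Next y)) (Next (And x y))).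
Proof.
  assert (H: prov ext (Imp x (Imp y (And x y)))).
  { pc (@nil form). destruct (pval v x), (pval v y); reflexivity. }
  apply K1 in H. pose proof (Ax_T1 ext y (And x y)) as H2.
  pc [Imp (Next x) (Next (Imp y (And x y))); Imp (And (Next y) (Next (Imp y (And x y)))) (Next (And x y))].
  destruct (v (Next x)), (v (Next y)), (v (Next (Imp y (And x y)))), (v (Next (And x y))); simpl in *; congruence.
Qed.

Ltac bsolve := cbn [pval] in *; repeat match goal with
  | |- context [?f ?t] => match type of f with form -> bool => destruct (f t) end
  | H : context [?f ?t] |- _ => match type of f with form -> bool => destruct (f t) end
  end; simpl in *; congruence.

Lemma prov_taut ext f : taut_instance f -> prov ext f.
Proof. apply Ax_Prop. Qed.

Lemma F1 ext x : prov ext (Imp (Next ffalse) (Neg (WNext x))).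
Proof.
  assert (H: prov ext (Imp ffalse (Neg x))) by (pc (@nil form); bsolve).
  apply K1 in H. pc [Imp (Next ffalse) (Next (Neg x))]. bsolve.
Qed.

Lemma F2 ext x : prov ext (Imp (WNext x) (Next x)).
Proof. pose proof (Ax_T3' ext x). pc [Iff (Next x) (Or (Next ffalse) (WNext x))]. bsolve. Qed.

Lemma F3 ext x : prov ext (Imp (And (Next x) (Neg (Next ffalse))) (WNext x)).
Proof. pose proof (Ax_T3' ext x). pc [Iff (Next x) (Or (Next ffalse) (WNext x))]. bsolve. Qed.

Lemma WN_mono ext x y : prov ext (Imp x y) -> prov ext (Imp (WNext x) (WNext y)).
Proof.
  intro H. apply K1 in H. pose proof (F2 ext x). pose proof (F1 ext x). pose proof (F3 ext y).
  pc [Imp (Next x) (Next y); Imp (WNext x) (Next x); Imp (Next ffalse) (Neg (WNext x));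
      Imp (And (Next y) (Neg (Next ffalse))) (WNext y)]. bsolve.
Qed.

Lemma Next_true ext : prov ext (Next ftrue).
Proof. apply R_RT1. pc (@nil form); bsolve. Qed.

Lemma Next_conj ext h l : (forall y, In y l -> prov ext (Imp h (Next y))) ->
  prov ext (Imp h (Next (conj l))).
Proof.
  induction l as [|y l IH]; intro H.
  - pose proof (Next_true ext). unfold conj; simpl fold_right. pc [Next ftrue]. bsolve.
  - assert (H1: prov ext (Imp h (Next y))) by (apply H; simpl; auto).
    assert (H2: prov ext (Imp h (Next (conj l)))) by (apply IH; intros; apply H; simpl; auto).
    pose proof (K2 ext y (conj l)).
    unfold conj; simpl fold_right; fold (conj l).
    pc [Imp h (Next y); Imp h (Next (conj l)); Imp (And (Next y) (Next (conj l))) (Next (And y (conj l)))].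
    bsolve.
Qed.

Lemma WN_contra ext x : prov ext (Neg (And (WNext x) (WNext (Neg x)))).
Proof.
  pose proof (F2 ext x). pose proof (F2 ext (Neg x)). pose proof (K2 ext x (Neg x)).
  assert (Hc: prov ext (Imp (And x (Neg x)) ffalse)) by (pc (@nil form); bsolve).
  apply K1 in Hc. pose proof (F1 ext x).
  pc [Imp (WNext x) (Next x); Imp (WNext (Neg x)) (Next (Neg x));
      Imp (And (Next x) (Next (Neg x))) (Next (And x (Neg x)));
      Imp (Next (And x (Neg x))) (Next ffalse); Imp (Next ffalse) (Neg (WNext x))]. bsolve.
Qed.

Lemma conj_cons x l : conj (x :: l) = And x (conj l).
Proof. reflexivity. Qed.
Lemma disj_cons x l : disj (x :: l) = Or x (disj l).
Proof. reflexivity. Qed.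

Lemma atom_mem ext (V : list form) x : In x V -> prov ext (Imp (conj V) x).
Proof.
  intro Hx. pc (@nil form). rewrite implb_true_iff, pval_conj. auto.
Qed.

Lemma atom_max ext phi V x : atom ext phi V -> cl phi x -> ~ In x V ->
  prov ext (Neg (And (conj V) x)).
Proof.
  intros [Hcl [Hc Hm]] Hx Hn.
  destruct (classic (consistent ext (conj (x :: V)))) as [C|C].
  - exfalso. apply Hn. apply (Hm (x :: V)); simpl; auto.
    intros y Hy; simpl; auto. intros y [<-|Hy]; auto.
  - unfold consistent in C. apply NNPP in C. unfold conj in C; simpl fold_right in C; fold (conj V) in C.
    pc [Neg (And x (conj V))]. bsolve.
Qed.

Lemma atom_deduce ext phi V x : atom ext phi V -> cl phi x ->
  prov ext (Imp (conj V) x) -> In x V.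
Proof.
  intros HA Hx Hp. apply NNPP; intro Hn.
  pose proof (atom_max _ _ _ _ HA Hx Hn). destruct HA as [_ [Hc _]]. apply Hc.
  pc [Imp (conj V) x; Neg (And (conj V) x)]. bsolve.
Qed.

Lemma atom_decide ext phi V x : atom ext phi V -> clp phi x -> In x V \/ In (Neg x) V.
Proof.
  intros HA Hx. apply NNPP; intro Hn. apply not_or_and in Hn as [H1 H2].
  pose proof (atom_max _ _ _ _ HA (or_introl Hx) H1).
  assert (Hn: cl phi (Neg x)) by (right; eauto).
  pose proof (atom_max _ _ _ _ HA Hn H2).
  destruct HA as [_ [Hc _]]. apply Hc.
  pc [Neg (And (conj V) x); Neg (And (conj V) (Neg x))]. bsolve.
Qed.

Lemma atom_incons ext phi V : atom ext phi V -> prov ext (Neg (conj V)) -> False.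
Proof. intros [_ [Hc _]] H. apply Hc, H. Qed.

Lemma atom_not_both ext phi V x : atom ext phi V -> In x V -> In (Neg x) V -> False.
Proof.
  intros HA H1 H2. apply (atom_incons _ _ _ HA).
  pose proof (atom_mem ext V _ H1). pose proof (atom_mem ext V _ H2).
  pc [Imp (conj V) x; Imp (conj V) (Neg x)]. bsolve.
Qed.

Lemma atom_clp ext phi V a b : atom ext phi V -> In (Until a b) V -> clp phi (Until a b).
Proof. intros [Hcl _] H. destruct (Hcl _ H) as [H'|[c [_ E]]]; [exact H'|discriminate]. Qed.

Lemma atom_until ext phi V a b : atom ext phi V -> In (Until a b) V -> ~ In b V ->
  In a V /\ prov ext (Imp (conj V) (WNext (Until a b))).
Proof.
  intros HA Hu Hb. pose proof (atom_clp _ _ _ _ _ HA Hu) as Hc.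
  destruct (atom_decide _ _ _ b HA (Cl_until2 _ _ _ Hc)) as [?|Hnb]; [contradiction|].
  pose proof (atom_mem ext V _ Hu). pose proof (atom_mem ext V _ Hnb).
  pose proof (Ax_T2' ext a b).
  assert (prov ext (Imp (conj V) (And a (WNext (Until a b))))).
  { pc [Imp (conj V) (Until a b); Imp (conj V) (Neg b);
        Iff (Until a b) (Or b (And a (WNext (Until a b))))]. bsolve. }
  split.
  - apply (atom_deduce ext phi); auto. left; eapply Cl_until1; eauto.
    pc [Imp (conj V) (And a (WNext (Until a b)))]. bsolve.
  - pc [Imp (conj V) (And a (WNext (Until a b)))]. bsolve.
Qed.

Lemma atom_until_last ext phi V a b : atom ext phi V -> In (Until a b) V ->
  In (Next ffalse) V -> In b V.
Proof.
  intros HA Hu Hf. apply NNPP; intro Hb.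
  destruct (atom_until _ _ _ _ _ HA Hu Hb) as [_ H].
  pose proof (atom_mem ext V _ Hf). pose proof (F1 ext (Until a b)).
  apply (atom_incons _ _ _ HA).
  pc [Imp (conj V) (WNext (Until a b)); Imp (conj V) (Next ffalse);
      Imp (Next ffalse) (Neg (WNext (Until a b)))]. bsolve.
Qed.

Lemma arrow_transfer ext phi V W x : arrow ext V W -> atom ext phi W ->
  prov ext (Imp (conj V) (WNext x)) -> cl phi x -> In x W.
Proof.
  intros Ha HW Hp Hx. apply NNPP; intro Hn.
  pose proof (atom_max _ _ _ _ HW Hx Hn).
  assert (H1: prov ext (Imp (conj W) (Neg x))) by (pc [Neg (And (conj W) x)]; bsolve).
  apply WN_mono in H1. pose proof (WN_contra ext x).
  apply Ha. pc [Imp (conj V) (WNext x); Imp (WNext (conj W)) (WNext (Neg x));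
     Neg (And (WNext x) (WNext (Neg x)))]. bsolve.
Qed.

Fixpoint negtails (a : form) : list form :=
  a :: match a with Neg a' => negtails a' | _ => [] end.

Fixpoint cls (f : form) : list form :=
  match f with
  | Var _ => [f]
  | Neg a => f :: cls a
  | And a b => f :: cls a ++ cls b
  | Next a => map Next (negtails a) ++ cls a
  | Until a b => f :: Neg (Next (Neg f)) :: Next (Neg f) :: Neg f :: Next f :: cls a ++ cls b
  end.

Inductive st : form -> form -> Prop :=
| st_neg a : st (Neg a) a
| st_and1 a b : st (And a b) a
| st_and2 a b : st (And a b) b
| st_next a : st (Next a) a
| st_nextneg a : st (Next (Neg a)) (Next a)
| st_u1 a b : st (Until a b) a
| st_u2 a b : st (Until a b) b
| st_u3 a b : st (Until a b) (WNext (Until a b)).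

Lemma self_cls f : In f (cls f).
Proof.
  destruct f; simpl; auto. apply in_or_app; left. destruct f; simpl; auto.
Qed.

Lemma negtails_cls a x : In x (negtails a) -> In x (cls a).
Proof.
  induction a; intro H; simpl in H; destruct H as [<-|H]; try apply self_cls; try contradiction.
  simpl; auto.
Qed.

Lemma negtails_neg a x : In (Neg x) (negtails a) -> In x (negtails a).
Proof.
  induction a; simpl; intros H; destruct H as [H|H]; try discriminate; try contradiction.
  - injection H as ->. right. destruct x; simpl; auto.
  - auto.
Qed.

Lemma cls_closed f y z : In y (cls f) -> st y z -> In z (cls f).
Proof.
  induction f; intros Hy Hs; simpl in *.
  - destruct Hy as [<-|[]]; inversion Hs.
  - destruct Hy as [<-|Hy].
    + inversion Hs; subst; right; apply self_cls.
    + right; eauto.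
  - destruct Hy as [<-|Hy].
    + inversion Hs; subst; right; apply in_or_app; [left|right]; apply self_cls.
    + apply in_app_or in Hy; right; apply in_or_app; destruct Hy; [left|right]; eauto.
  - apply in_app_or in Hy; destruct Hy as [Hy|Hy].
    + apply in_map_iff in Hy as [x [<- Hx]]. inversion Hs; subst.
      * apply in_or_app; right. apply negtails_cls; auto.
      * apply in_or_app; left. apply in_map. apply negtails_neg; auto.
    + apply in_or_app; right; eauto.
  - destruct Hy as [<-|[<-|[<-|[<-|[<-|Hy]]]]];
      try (inversion Hs; subst; simpl; auto 10 using in_or_app, self_cls; fail).
    apply in_app_or in Hy; do 5 right; apply in_or_app; destruct Hy; [left|right]; eauto.
Qed.

Lemma clp_fin phi : exists L, forall x, clp phi x -> In x L.
Proof.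
  exists (cls phi ++ cls (Until ftrue (Next ffalse))).
  assert (C: forall y z, In y (cls phi ++ cls (Until ftrue (Next ffalse))) -> st y z ->
     In z (cls phi ++ cls (Until ftrue (Next ffalse)))).
  { intros y z H Hs. apply in_app_or in H; apply in_or_app; destruct H; [left|right];
    eapply cls_closed; eauto. }
  induction 1; try (eapply C; [eassumption| constructor]).
  - apply in_or_app; left; apply self_cls.
  - apply in_or_app; right; apply self_cls.
Qed.

Lemma cfilter {X} (P : X -> Prop) l : exists l', forall x, In x l' <-> In x l /\ P x.
Proof.
  induction l as [|a l [l' IH]].
  - exists []; simpl; tauto.
  - destruct (classic (P a)).
    + exists (a :: l'); intro x; simpl; rewrite IH; split; [intros [<-|?]; tauto|].
      intros [[<-|?] ?]; auto.
    + exists l'; intro x; simpl; rewrite IH; split; [tauto|].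
      intros [[<-|?] ?]; auto; contradiction.
Qed.

Lemma clp_list phi : exists L, forall x, In x L <-> clp phi x.
Proof.
  destruct (clp_fin phi) as [L HL]. destruct (cfilter (clp phi) L) as [L' H].
  exists L'. intro x; rewrite H; firstorder.
Qed.

Fixpoint asg (L : list form) : list (list form) :=
  match L with
  | [] => [[]]
  | x :: l => map (cons x) (asg l) ++ map (cons (Neg x)) (asg l)
  end.

Lemma asg_taut ext L : prov ext (disj (map conj (asg L))).
Proof.
  apply Ax_Prop. intro v. apply pval_disj.
  induction L as [|x l [s [Hs Hv]]]; simpl.
  - exists (conj []). split; auto. apply pval_ftrue.
  - apply in_map_iff in Hs as [sg [<- Hsg]].
    destruct (pval v x) eqn:E.
    + exists (conj (x :: sg)). split. apply in_map. apply in_or_app; left; apply in_map; auto.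
      unfold conj; simpl fold_right; rewrite pval_And, E. exact Hv.
    + exists (conj (Neg x :: sg)). split. apply in_map. apply in_or_app; right; apply in_map; auto.
      unfold conj; simpl fold_right; rewrite pval_And, pval_Neg, E. exact Hv.
Qed.

Lemma asg_prop L s : In s (asg L) ->
  (forall x, In x L -> In x s \/ In (Neg x) s) /\
  (forall y, In y s -> exists x, In x L /\ (y = x \/ y = Neg x)).
Proof.
  revert s; induction L as [|x l IH]; intros s Hs; simpl in *.
  - destruct Hs as [<-|[]]. simpl; split; tauto.
  - apply in_app_or in Hs; destruct Hs as [Hs|Hs]; apply in_map_iff in Hs as [sg [<- Hsg]];
    destruct (IH _ Hsg) as [H1 H2]; split.
    + intros y [<-|Hy]; simpl; auto. destruct (H1 _ Hy); auto.
    + intros y [<-|Hy]; eauto. destruct (H2 _ Hy) as [z [? ?]]; eauto.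
    + intros y [<-|Hy]; simpl; auto. destruct (H1 _ Hy); auto.
    + intros y [<-|Hy]; eauto. destruct (H2 _ Hy) as [z [? ?]]; eauto.
Qed.

Lemma disj_map_in v f (l : list (list form)) :
  pval v (disj (map f l)) = true <-> exists x, In x l /\ pval v (f x) = true.
Proof.
  rewrite pval_disj. split.
  - intros [y [Hy Hv]]. apply in_map_iff in Hy as [x [<- Hx]]; eauto.
  - intros [x [Hx Hv]]. exists (f x); split; auto. apply in_map; auto.
Qed.

Lemma fin_atoms ext phi : exists A, (forall U, In U A -> atom ext phi U) /\
  prov ext (disj (map conj A)).
Proof.
  destruct (clp_list phi) as [L HL].
  destruct (cfilter (fun s => consistent ext (conj s)) (asg L)) as [A HA].
  exists A. split.
  - intros U HU. apply HA in HU as [Hs Hc]. destruct (asg_prop _ _ Hs) as [H1 H2].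
    split; [|split; auto].
    + intros y Hy. destruct (H2 _ Hy) as [x [Hx [->| ->]]]; apply HL in Hx.
      left; auto. right; eauto.
    + intros W HUW HWcl HWc y Hy. apply NNPP; intro Hn.
      assert (Hb: forall z, In z W -> In (Neg z) W -> False).
      { intros z Hz Hnz. apply HWc. pose proof (atom_mem ext W _ Hz). pose proof (atom_mem ext W _ Hnz).
        pc [Imp (conj W) z; Imp (conj W) (Neg z)]. bsolve. }
      destruct (HWcl _ Hy) as [Hc'|[c [Hc' ->]]].
      * apply HL in Hc'. destruct (H1 _ Hc') as [?|Hu]; auto. exfalso; apply (Hb y); auto.
      * apply HL in Hc'. destruct (H1 _ Hc') as [Hu|?]; auto. exfalso; apply (Hb c); auto.
  - (* remove inconsistent assignments *)
    destruct (cfilter (fun s => ~ consistent ext (conj s)) (asg L)) as [B HB].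
    assert (Hneg: prov ext (conj (map (fun s => Neg (conj s)) B))).
    { assert (G: forall l, (forall s, In s l -> ~ consistent ext (conj s)) ->
         prov ext (conj (map (fun s => Neg (conj s)) l))).
      { induction l as [|s l IH]; intro H.
        - pc (@nil form); bsolve.
        - simpl map. rewrite conj_cons.
          assert (P1: prov ext (Neg (conj s))) by (apply NNPP, H; simpl; auto).
          assert (P2: prov ext (conj (map (fun s => Neg (conj s)) l))) by (apply IH; intros; apply H; simpl; auto).
          pc [Neg (conj s); conj (map (fun s => Neg (conj s)) l)]. bsolve. }
      apply G. intros s Hs; apply HB in Hs; tauto. }
    pose proof (asg_taut ext L).
    pc [disj (map conj (asg L)); conj (map (fun s => Neg (conj s)) B)].
    match goal with H : pval v (disj (map conj (asg L))) = true |- _ => apply disj_map_in in H as [s [Hs Hv]] end.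
    apply disj_map_in. exists s. split; auto. apply HA. split; auto.
    intro Hc. match goal with H : pval v (conj (map _ B)) = true |- _ => rewrite pval_conj in H; rename H into HH end.
    assert (Hin: In (Neg (conj s)) (map (fun s => Neg (conj s)) B)).
    { apply (in_map (fun s => Neg (conj s))). apply HB; split; auto. }
    apply HH in Hin. rewrite pval_Neg, Hv in Hin. discriminate.
Qed.

Definition lst (d : list (list form)) : list form := nth (pred (length d)) d [].

Lemma nth_app_lst (d q : list (list form)) m : d <> [] ->
  nth (pred (length d) + m) (d ++ q) [] = nth m (lst d :: q) [].
Proof.
  intro Hd. destruct m.
  - rewrite Nat.add_0_r. rewrite app_nth1. reflexivity. destruct d; [congruence|simpl; lia].
  - rewrite app_nth2 by (destruct d; [congruence|simpl; lia]).
    simpl. f_equal. destruct d; [congruence|simpl; lia].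
Qed.

Lemma fchain_app ext phi d q : fchain ext phi d -> d <> [] -> fchain ext phi (lst d :: q) ->
  fchain ext phi (d ++ q).
Proof.
  intros [Ha Hr] Hd [Ha2 Hr2]. simpl length in Ha2, Hr2.
  assert (Hn: length d > 0) by (destruct d; [congruence|simpl; lia]).
  split.
  - intros i Hi. rewrite length_app in Hi. destruct (Nat.lt_ge_cases i (length d)).
    + rewrite app_nth1 by auto. auto.
    + replace i with (pred (length d) + (i - pred (length d))) by lia.
      rewrite nth_app_lst by auto. apply Ha2. simpl. lia.
  - intros i Hi. rewrite length_app in Hi. destruct (Nat.lt_ge_cases (S i) (length d)).
    + rewrite !app_nth1 by lia. auto.
    + replace i with (pred (length d) + (i - pred (length d))) by lia.
      replace (S (pred (length d) + (i - pred (length d)))) with (pred (length d) + S (i - pred (length d))) by lia.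
      rewrite !nth_app_lst by auto. apply Hr2. simpl. lia.
Qed.

Lemma disj_elim ext (l : list (list form)) c :
  (forall U, In U l -> prov ext (Imp (conj U) c)) -> prov ext (Imp (disj (map conj l)) c).
Proof.
  induction l as [|U l IH]; intro H.
  - pc (@nil form). unfold disj; simpl. bsolve.
  - simpl map. rewrite disj_cons.
    assert (H1: prov ext (Imp (conj U) c)) by (apply H; simpl; auto).
    assert (H2: prov ext (Imp (disj (map conj l)) c)) by (apply IH; intros; apply H; simpl; auto).
    pc [Imp (conj U) c; Imp (disj (map conj l)) c]. bsolve.
Qed.

Lemma clp_nf phi : clp phi (Next ffalse).
Proof. exact (Cl_until2 _ _ _ (Cl_fin phi)). Qed.

Lemma succ ext phi A : (forall U, In U A -> atom ext phi U) -> prov ext (disj (map conj A)) ->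
  forall V, atom ext phi V -> ~ In (Next ffalse) V -> exists U, In U A /\ arrow ext V U.
Proof.
  intros HA HD V HV Hn. apply NNPP; intro HN.
  destruct (atom_decide _ _ _ _ HV (clp_nf phi)) as [?|Hnf]; [contradiction|].
  assert (H1: prov ext (Imp (conj V) (Next (conj (map (fun U => Neg (conj U)) A))))).
  { apply Next_conj. intros y Hy. apply in_map_iff in Hy as [U [<- HU]].
    assert (~ arrow ext V U) by (intro; apply HN; eauto).
    unfold arrow, consistent in H. apply NNPP in H.
    pc [Neg (And (conj V) (WNext (conj U)))]. bsolve. }
  assert (H2: prov ext (Imp (conj (map (fun U => Neg (conj U)) A)) (Neg (disj (map conj A))))).
  { pc (@nil form). apply implb_true_iff. intro Hc. rewrite pval_conj in Hc.
    apply negb_true_iff. destruct (pval v (disj (map conj A))) eqn:E; auto.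
    apply disj_map_in in E as [U [HU HvU]].
    specialize (Hc (Neg (conj U))). rewrite pval_Neg, HvU in Hc. symmetry; apply Hc.
    apply (in_map (fun U => Neg (conj U))); auto. }
  apply K1 in H2. pose proof (R_RT1 _ _ HD) as H3. pose proof (F3 ext (disj (map conj A))).
  pose proof (atom_mem ext V _ Hnf).
  apply (atom_incons _ _ _ HV).
  pc [Imp (conj V) (Next (conj (map (fun U => Neg (conj U)) A)));
      Imp (Next (conj (map (fun U => Neg (conj U)) A))) (Next (Neg (disj (map conj A))));
      Next (disj (map conj A));
      Imp (And (Next (disj (map conj A))) (Neg (Next ffalse))) (WNext (disj (map conj A)));
      Imp (conj V) (Neg (Next ffalse))]. bsolve.
Qed.

Lemma fchain_atom ext phi d i : fchain ext phi d -> i < length d -> atom ext phi (nth i d []).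
Proof. intros [H _]; auto. Qed.

Lemma fchain_snoc ext phi d U : fchain ext phi d -> d <> [] -> arrow ext (lst d) U ->
  atom ext phi U -> fchain ext phi (d ++ [U]).
Proof.
  intros Hc Hd Ha HU. apply fchain_app; auto. split.
  - intros i Hi. simpl in Hi. destruct i as [|[|]]; simpl; try lia; auto.
    apply fchain_atom; auto. destruct d; [congruence| simpl; lia].
  - intros i Hi. simpl in Hi. destruct i; [simpl; auto| lia].
Qed.

Lemma E ext phi A : (forall U, In U A -> atom ext phi U) -> prov ext (disj (map conj A)) ->
  forall V a b, atom ext phi V -> In (Until a b) V ->
  exists p, fchain ext phi (V :: p) /\ In b (nth (length p) (V :: p) []) /\
    forall k, k < length p -> In a (nth k (V :: p) []).
Proof.
  intros HA HD V a b HV Hu. apply NNPP; intro NF.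
  pose proof (atom_clp _ _ _ _ _ HV Hu) as Hcu.
  set (reach := fun W => exists p, fchain ext phi (V :: p) /\ nth (length p) (V :: p) [] = W /\
     forall k, k <= length p -> In (Until a b) (nth k (V :: p) []) /\ ~ In b (nth k (V :: p) [])).
  assert (Rat: forall W, reach W -> atom ext phi W /\ In (Until a b) W /\ ~ In b W).
  { intros W [p [Hc [<- Hk]]]. split. apply (fchain_atom ext phi (V :: p)); [auto| simpl; lia]. apply (Hk (length p)); auto. }
  assert (R0: reach V).
  { exists []. split. split; simpl; intros i Hi; [destruct i; [auto|lia]|lia].
    split; auto. intros k Hk. destruct k; [|simpl in Hk; lia]. simpl. split; auto.
    intro Hb. apply NF. exists []. split. split; simpl; intros i Hi; [destruct i; [auto|lia]|lia].
    split; auto. intros; simpl in *; lia. }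
  assert (Rstep: forall W U, reach W -> In U A -> arrow ext W U -> In (Until a b) U -> reach U).
  { intros W U [p [Hc [HW Hk]]] HUA Ha HuU.
    assert (Hc': fchain ext phi ((V :: p) ++ [U])).
    { apply fchain_snoc; auto. congruence. unfold lst. simpl length. simpl pred. rewrite HW; auto. }
    assert (Hold: forall k, k <= length p -> nth k ((V :: p) ++ [U]) [] = nth k (V :: p) []).
    { intros k Hkk. apply app_nth1. simpl; lia. }
    assert (Hnew: nth (S (length p)) ((V :: p) ++ [U]) [] = U).
    { rewrite app_nth2; simpl; [rewrite Nat.sub_diag; auto| lia]. }
    assert (Hb: ~ In b U).
    { intro Hb. apply NF. exists (p ++ [U]). split; [exact Hc'|]. split.
      - rewrite length_app; cbn [length]; rewrite Nat.add_1_r. change (V :: p ++ [U]) with ((V :: p) ++ [U]).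
        rewrite Hnew; auto.
      - intros k Hkk. rewrite length_app in Hkk; simpl in Hkk.
        change (V :: p ++ [U]) with ((V :: p) ++ [U]). rewrite Hold by lia.
        destruct (Hk k ltac:(lia)) as [H1 H2].
        destruct (atom_until ext phi _ a b (fchain_atom ext phi (V :: p) k Hc ltac:(simpl; lia)) H1 H2) as [Ha2 _]; exact Ha2. }
    exists (p ++ [U]). split; [exact Hc'|]. split.
    - rewrite length_app; cbn [length]; rewrite Nat.add_1_r. change (V :: p ++ [U]) with ((V :: p) ++ [U]).
      rewrite Hnew; auto.
    - intros k Hkk. rewrite length_app in Hkk; simpl in Hkk.
      change (V :: p ++ [U]) with ((V :: p) ++ [U]).
      destruct (Nat.le_gt_cases k (length p)).
      + rewrite Hold by lia. auto.
      + replace k with (S (length p)) by lia. rewrite Hnew. auto. }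
  destruct (cfilter reach A) as [S HS].
  set (phi' := Or (conj V) (disj (map conj S))).
  assert (Key: forall W, reach W -> prov ext (Imp (conj W) (And (Neg b) (Next phi')))).
  { intros W HW. destruct (Rat W HW) as [HWa [HWu HWb]].
    destruct (atom_decide _ _ _ b HWa (Cl_until2 _ _ _ Hcu)) as [?|Hnb]; [contradiction|].
    destruct (cfilter (fun U => ~ arrow ext W U) A) as [NA HNA].
    set (X := conj (Until a b :: map (fun U => Neg (conj U)) NA)).
    assert (HX: prov ext (Imp (conj W) (Next X))).
    { apply Next_conj. intros y [<-|Hy].
      - destruct (atom_until _ _ _ _ _ HWa HWu HWb) as [_ H1]. pose proof (F2 ext (Until a b)).
        pc [Imp (conj W) (WNext (Until a b)); Imp (WNext (Until a b)) (Next (Until a b))]. bsolve.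
      - apply in_map_iff in Hy as [U [<- HU]]. apply HNA in HU as [_ HU].
        unfold arrow, consistent in HU. apply NNPP in HU.
        pc [Neg (And (conj W) (WNext (conj U)))]. bsolve. }
    assert (HXp: prov ext (Imp X phi')).
    { assert (G: prov ext (Imp (disj (map conj A)) (Imp X phi'))).
      { apply disj_elim. intros U HU. pose proof (HA U HU) as HUa.
        destruct (atom_decide _ _ _ _ HUa Hcu) as [HuU|HnU].
        - destruct (classic (arrow ext W U)) as [Har|Har].
          + assert (HUS: In U S) by (apply HS; split; eauto).
            pc (@nil form). apply implb_true_iff; intro Hv. apply implb_true_iff; intro.
            unfold phi'. pv. apply orb_true_iff; right. apply disj_map_in. eauto.
          + assert (HUN: In U NA) by (apply HNA; auto).
            pc (@nil form). apply implb_true_iff; intro Hv. apply implb_true_iff; intro HXv.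
            exfalso. unfold X in HXv. rewrite pval_conj in HXv.
            specialize (HXv (Neg (conj U))). rewrite pval_Neg, Hv in HXv.
            assert (false = true); [|discriminate]. apply HXv. right.
            apply (in_map (fun U => Neg (conj U))); auto.
        - pose proof (atom_mem ext U _ HnU).
          pc [Imp (conj U) (Neg (Until a b))]. unfold X. rewrite conj_cons. pv. bsolve. }
      pc [disj (map conj A); Imp (disj (map conj A)) (Imp X phi')]. bsolve. }
    apply K1 in HXp. pose proof (atom_mem ext W _ Hnb).
    pc [Imp (conj W) (Next X); Imp (Next X) (Next phi'); Imp (conj W) (Neg b)]. bsolve. }
  assert (Hphi: prov ext (Imp phi' (And (Neg b) (Next phi')))).
  { pose proof (Key V R0).
    assert (prov ext (Imp (disj (map conj S)) (And (Neg b) (Next phi')))).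
    { apply disj_elim. intros U HU. apply Key. apply HS; auto. }
    unfold phi' at 1. pc [Imp (conj V) (And (Neg b) (Next phi'));
       Imp (disj (map conj S)) (And (Neg b) (Next phi'))]. bsolve. }
  apply (R_RT2 _ a) in Hphi. pose proof (atom_mem ext V _ Hu).
  apply (atom_incons _ _ _ HV).
  pc [Imp phi' (Neg (Until a b)); Imp (conj V) (Until a b)]. unfold phi' in *. pv. bsolve.
Qed.

Definition fulfilled (d : list (list form)) i a b :=
  exists j, i <= j /\ j < length d /\ In b (nth j d []) /\
    (forall k, i <= k -> k < j -> In a (nth k d [])).

Lemma fulfilled_app d q i a b : fulfilled d i a b -> fulfilled (d ++ q) i a b.
Proof.
  intros [j [H1 [H2 [H3 H4]]]]. exists j. rewrite length_app. repeat split; try lia.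
  rewrite app_nth1; auto. intros k Hk1 Hk2. rewrite app_nth1 by lia. auto.
Qed.

Lemma propag ext phi d i a b : fchain ext phi d -> i < length d -> In (Until a b) (nth i d []) ->
  fulfilled d i a b \/ (forall k, i <= k -> k < length d ->
     In (Until a b) (nth k d []) /\ In a (nth k d []) /\ ~ In b (nth k d [])).
Proof.
  intros Hc Hi Hu. destruct (classic (fulfilled d i a b)) as [F|NF]; [left; auto|right].
  assert (Hcu: clp phi (Until a b)) by (eapply atom_clp; [apply fchain_atom; eauto|eauto]).
  assert (G: forall m, i + m < length d -> forall k, i <= k <= i + m ->
     In (Until a b) (nth k d []) /\ In a (nth k d []) /\ ~ In b (nth k d [])).
  { induction m as [|m IH]; intros Hm k Hk.
    - replace k with i by lia.
      assert (Hb: ~ In b (nth i d [])).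
      { intro Hb. apply NF. exists i. repeat split; auto; lia. }
      destruct (atom_until ext phi _ a b (fchain_atom ext phi d i Hc Hi) Hu Hb). auto.
    - destruct (Nat.le_gt_cases k (i + m)). apply IH; lia.
      replace k with (S (i + m)) by lia.
      destruct (IH ltac:(lia) (i + m) ltac:(lia)) as [Hu' [Ha' Hb']].
      destruct (atom_until ext phi _ a b (fchain_atom ext phi d (i + m) Hc ltac:(lia)) Hu' Hb') as [_ HW].
      assert (HU: In (Until a b) (nth (S (i + m)) d [])).
      { apply (arrow_transfer ext phi (nth (i + m) d []) _ (Until a b));
        first [apply (proj2 Hc); lia | apply fchain_atom; [auto|lia] | exact HW | left; auto]. }
      assert (Hb: ~ In b (nth (S (i + m)) d [])).
      { intro Hb. apply NF. exists (S (i + m)). repeat split; auto; try lia.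
        intros k' Hk1 Hk2. apply IH; lia. }
      destruct (atom_until ext phi _ a b (fchain_atom ext phi d (S (i + m)) Hc ltac:(lia)) HU Hb). auto. }
  intros k Hk1 Hk2. apply (G (k - i)); lia.
Qed.

Lemma terminal ext phi d : fchain ext phi d -> d <> [] -> In (Next ffalse) (lst d) ->
  facceptable d.
Proof.
  intros Hc Hd Hf i a b Hi Hu.
  destruct (propag _ _ _ _ _ _ Hc Hi Hu) as [F|P]; [exact F|].
  exfalso. assert (Hn: pred (length d) < length d) by (destruct d; [congruence|simpl; lia]).
  destruct (P (pred (length d)) ltac:(lia) Hn) as [H1 [_ H2]]. apply H2.
  apply (atom_until_last ext phi (lst d) a b); [apply fchain_atom; auto | exact H1 | exact Hf].
Qed.

Lemma G1 ext phi A : (forall U, In U A -> atom ext phi U) -> prov ext (disj (map conj A)) ->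
  forall d a b, fchain ext phi d -> d <> [] ->
  exists q, fchain ext phi (d ++ q) /\
    forall i, i < length d -> In (Until a b) (nth i d []) -> fulfilled (d ++ q) i a b.
Proof.
  intros HA HD d a b Hc Hd.
  assert (Hn: pred (length d) < length d) by (destruct d; [congruence|simpl; lia]).
  destruct (classic (In (Until a b) (lst d))) as [Hl|Hl].
  - destruct (E _ _ _ HA HD (lst d) a b (fchain_atom _ _ _ _ Hc Hn) Hl) as [p [Hp [Hb Ha]]].
    exists p. split. apply fchain_app; auto.
    intros i Hi Hu. destruct (propag _ _ _ _ _ _ Hc Hi Hu) as [F|P]; [apply fulfilled_app; auto|].
    exists (pred (length d) + length p). rewrite length_app. repeat split; try lia.
    + rewrite nth_app_lst; auto.
    + intros k Hk1 Hk2. destruct (Nat.lt_ge_cases k (length d)).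
      * rewrite app_nth1 by auto. apply P; auto.
      * replace k with (pred (length d) + (k - pred (length d))) by lia.
        rewrite nth_app_lst by auto. apply Ha. lia.
  - exists []. rewrite app_nil_r. split; auto.
    intros i Hi Hu. destruct (propag _ _ _ _ _ _ Hc Hi Hu) as [F|P]; [auto|].
    exfalso. apply Hl. apply (P (pred (length d))); lia.
Qed.

Lemma Fl ext phi A : (forall U, In U A -> atom ext phi U) -> prov ext (disj (map conj A)) ->
  forall l d, fchain ext phi d -> d <> [] ->
  exists q, fchain ext phi (d ++ q) /\
    forall i a b, i < length d -> In (Until a b) (nth i d []) -> In (Until a b) l ->
      fulfilled (d ++ q) i a b.
Proof.
  intros HA HD l; induction l as [|x l IH]; intros d Hc Hd.
  - exists []. rewrite app_nil_r. split; auto. intros ? ? ? ? ? [].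
  - destruct (IH d Hc Hd) as [q1 [Hc1 Hf1]].
    assert (Hd1: d ++ q1 <> []) by (destruct d; [congruence|discriminate]).
    destruct x as [| | | |a0 b0];
      try (exists q1; split; auto; intros i a b Hi Hu [Heq|Hl]; [discriminate|auto]; fail).
    destruct (G1 _ _ _ HA HD (d ++ q1) a0 b0 Hc1 Hd1) as [q2 [Hc2 Hf2]].
    exists (q1 ++ q2). rewrite app_assoc. split; auto.
    intros i a b Hi Hu [Heq|Hl].
    + injection Heq as -> ->. apply Hf2. rewrite length_app; lia. rewrite app_nth1; auto.
    + apply fulfilled_app; auto.
Qed.

Lemma in_concat_nth (d : list (list form)) i x : i < length d -> In x (nth i d []) -> In x (concat d).
Proof. intros Hi Hx. apply in_concat. exists (nth i d []). split; auto. apply nth_In; auto. Qed.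

Lemma fprefix_trans c d e : fprefix c d -> fprefix d e -> fprefix c e.
Proof. intros [x ->] [y ->]. exists (x ++ y). apply app_assoc_reverse. Qed.

Lemma fprefix_nth (d e : list (list form)) i : fprefix d e -> i < length d -> nth i e [] = nth i d [].
Proof. intros [x ->] Hi. apply app_nth1; auto. Qed.

Lemma INF ext phi A : (forall U, In U A -> atom ext phi U) -> prov ext (disj (map conj A)) ->
  forall c, fchain ext phi c -> c <> [] ->
  (forall d, fchain ext phi d -> fprefix c d -> d <> [] -> ~ In (Next ffalse) (lst d)) ->
  exists s, ichain ext phi s /\ iacceptable s /\ iprefix c s.
Proof.
  intros HA HD c Hc Hcn Hyp.
  set (Inv := fun d => fchain ext phi d /\ fprefix c d /\ d <> []).
  assert (Step: forall d, exists d', Inv d -> Inv d' /\ fprefix d d' /\ length d < length d' /\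
     forall i a b, i < length d -> In (Until a b) (nth i d []) -> fulfilled d' i a b).
  { intro d. destruct (classic (Inv d)) as [[Hdc [Hdp Hdn]]|NI]; [|exists d; tauto].
    destruct (Fl _ _ _ HA HD (concat d) d Hdc Hdn) as [q1 [Hc1 Hf1]].
    assert (Hd1: d ++ q1 <> []) by (destruct d; [congruence|discriminate]).
    assert (Hp1: fprefix c (d ++ q1)) by (eapply fprefix_trans; [eauto| exists q1; auto]).
    destruct (succ _ _ _ HA HD (lst (d ++ q1))) as [U [HU Har]].
    { apply fchain_atom; auto. destruct (d ++ q1); [congruence|simpl; lia]. }
    { apply Hyp; auto. }
    exists ((d ++ q1) ++ [U]). intros _. split; [split; [|split]|split; [|split]].
    - apply fchain_snoc; auto.
    - eapply fprefix_trans; [eauto| exists [U]; auto].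
    - destruct d; [congruence|discriminate].
    - exists (q1 ++ [U]). apply app_assoc_reverse.
    - rewrite !length_app; simpl; lia.
    - intros i a b Hi Hu. apply fulfilled_app. apply Hf1; auto. eapply in_concat_nth; eauto. }
  set (f := fun d => proj1_sig (constructive_indefinite_description _ (Step d))).
  assert (Hf: forall d, Inv d -> Inv (f d) /\ fprefix d (f d) /\ length d < length (f d) /\
     forall i a b, i < length d -> In (Until a b) (nth i d []) -> fulfilled (f d) i a b).
  { intros d Hd. unfold f. destruct (constructive_indefinite_description _ (Step d)) as [d' Hd']. simpl. auto. }
  set (D := fun m => Nat.iter m f c).
  assert (DS: forall m, D (S m) = f (D m)) by reflexivity.
  assert (DInv: forall m, Inv (D m)).
  { induction m. { split; [exact Hc|split; [exists []; rewrite app_nil_r; auto | exact Hcn]]. }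
    rewrite DS. apply Hf; auto. }
  assert (Dlen: forall m, m < length (D m)).
  { induction m. destruct c; [congruence|simpl; lia]. rewrite DS.
    destruct (Hf _ (DInv m)) as [_ [_ [H _]]]. lia. }
  assert (Dpre: forall m k, fprefix (D m) (D (k + m))).
  { intros m k; induction k. exists []; rewrite app_nil_r; auto.
    simpl plus. rewrite DS. eapply fprefix_trans; eauto. apply Hf; auto. }
  set (s := fun i => nth i (D (S i)) []).
  assert (sD: forall m i, i < length (D m) -> s i = nth i (D m) []).
  { intros m i Hi. unfold s. destruct (Nat.le_gt_cases m (S i)).
    - replace (S i) with ((S i - m) + m) by lia. apply fprefix_nth; auto.
    - replace m with ((m - S i) + S i) by lia. symmetry. apply fprefix_nth; [apply Dpre| specialize (Dlen (S i)); lia]. }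
  exists s. split; [|split].
  - intro i. split.
    + rewrite (sD (S i)) by (specialize (Dlen (S i)); lia). apply fchain_atom. apply DInv. specialize (Dlen (S i)); lia.
    + rewrite (sD (S (S i)) i) by (specialize (Dlen (S (S i))); lia).
      rewrite (sD (S (S i)) (S i)) by (specialize (Dlen (S (S i))); lia).
      apply (DInv (S (S i))). specialize (Dlen (S (S i))); lia.
  - intros i a b Hu.
    assert (Hi: i < length (D (S i))) by (specialize (Dlen (S i)); lia).
    rewrite (sD _ _ Hi) in Hu.
    destruct (Hf _ (DInv (S i))) as [_ [_ [_ Hful]]].
    destruct (Hful i a b Hi Hu) as [j [H1 [H2 [H3 H4]]]]. rewrite <- DS in *.
    exists j. split; auto. split.
    + rewrite (sD _ _ H2); auto.
    + intros k Hk1 Hk2. rewrite (sD (S (S i))) by lia. auto.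
  - intros i Hi. symmetry. rewrite (sD 0); auto.
Qed.

Fixpoint sat (sg : nat -> nat -> bool) (i : nat) (f : form) : Prop :=
  match f with
  | Var n => sg i n = true
  | Neg a => ~ sat sg i a
  | And a b => sat sg i a /\ sat sg i b
  | Next a => sat sg (S i) a
  | Until a b => exists j, i <= j /\ sat sg j b /\ forall k, i <= k -> k < j -> sat sg k a
  end.

Lemma sat_pval sg i f :
  pval (fun g => if excluded_middle_informative (sat sg i g) then true else false) f = true <-> sat sg i f.
Proof.
  induction f; simpl;
  try (destruct excluded_middle_informative; split; auto; congruence).
  - rewrite negb_true_iff, <- not_true_iff_false, IHf. tauto.
  - rewrite andb_true_iff, IHf1, IHf2. tauto.
Qed.

Lemma sat_Imp sg i a b : sat sg i (Imp a b) <-> (sat sg i a -> sat sg i b).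
Proof. simpl. split; [intros H Ha; apply NNPP; tauto| tauto]. Qed.

Lemma sat_Iff sg i a b : (sat sg i a <-> sat sg i b) -> sat sg i (Iff a b).
Proof. intro H. unfold Iff. cbn [sat]. split; apply sat_Imp; apply H. Qed.
Lemma sat_Or sg i a b : sat sg i (Or a b) <-> (sat sg i a \/ sat sg i b).
Proof. unfold Or. cbn [sat]. split; [intro H; apply NNPP; tauto| tauto]. Qed.
Lemma sat_WNext sg i a : sat sg i (WNext a) <-> sat sg (S i) a.
Proof. unfold WNext. cbn [sat]. split; [intro H; apply NNPP; tauto| tauto]. Qed.

Lemma sound f : prov ext_inf f -> forall sg i, sat sg i f.
Proof.
  induction 1; intros sg i.
  - apply sat_pval. apply H.
  - rewrite H. simpl. tauto.
  - exact (proj1 (sat_Imp sg i a b) (IHprov2 sg i) (IHprov1 sg i)).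
  - apply (proj2 (sat_Imp sg i _ _)). simpl. intros [H1 H2]. exact (proj1 (sat_Imp _ _ a b) H2 H1).
  - apply sat_Iff. rewrite sat_Or. cbn [sat]. rewrite sat_WNext. cbn [sat]. split.
    + intros [j [Hj [Hb Ha]]]. destruct (Nat.eq_dec i j) as [->|Hne]; [tauto|].
      right. split. apply Ha; lia. exists j. repeat split; auto; try lia. intros; apply Ha; lia.
    + intros [Hb|[Ha [j [Hj [Hb Hk]]]]].
      * exists i. repeat split; auto. intros; lia.
      * exists j. repeat split; auto; try lia. intros k Hk1 Hk2.
        destruct (Nat.eq_dec k i) as [->|]; auto. apply Hk; lia.
  - apply sat_Iff. rewrite sat_Or, sat_WNext. unfold ffalse. cbn [sat].
    split; [tauto|]. intros [H|H]; [|exact H]. exfalso. apply H. unfold ftrue. cbn [sat]. tauto.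
  - simpl. apply IHprov.
  - apply (proj2 (sat_Imp sg i c (Neg (Until a b)))). intros Hc [j [Hj [Hb _]]].
    assert (G: forall m, sat sg (i + m) c).
    { induction m. rewrite Nat.add_0_r; auto.
      destruct (proj1 (sat_Imp sg (i + m) c _) (IHprov sg (i + m)) IHm) as [_ Hn].
      simpl in Hn. rewrite Nat.add_succ_r. exact Hn. }
    assert (Hcj: sat sg j c) by (replace j with (i + (j - i)) by lia; apply G).
    destruct (proj1 (sat_Imp sg j c _) (IHprov sg j) Hcj) as [Hnb _]. contradiction.
Qed.

Lemma inf_consistent : ~ prov ext_inf ffalse.
Proof.
  intro H. pose proof (sound _ H (fun _ _ => true) 0). simpl in H0. apply H0. intros [H1 H2]. tauto.
Qed.

Lemma fchain_nil ext phi : fchain ext phi [].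
Proof. split; simpl; intros; lia. Qed.

Lemma facc_nil : facceptable [].
Proof. intros i a b Hi; simpl in Hi; lia. Qed.

Lemma fchain_single ext phi U : atom ext phi U -> fchain ext phi [U].
Proof. intro H. split; simpl; intros i Hi; [destruct i; [auto|lia]|lia]. Qed.

Lemma lst_app (c p : list (list form)) : c <> [] -> lst (c ++ p) = nth (length p) (lst c :: p) [].
Proof.
  intro Hc. unfold lst at 1. rewrite length_app.
  replace (pred (length c + length p)) with (pred (length c) + length p) by (destruct c; [congruence|simpl; lia]).
  apply nth_app_lst; auto.
Qed.

Lemma lst_atom ext phi d : fchain ext phi d -> d <> [] -> atom ext phi (lst d).
Proof. intros Hc Hd. apply fchain_atom; auto. destruct d; [congruence|simpl; lia]. Qed.

Lemma form_eq_dec : forall x y : form, {x = y} + {x <> y}.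
Proof. decide equality; apply Nat.eq_dec. Defined.

Theorem lemma1 (phi : form) :
  (* (f) *)
  (forall c, fchain ext_gen phi c ->
     (exists d, fchain ext_gen phi d /\ facceptable d /\ fprefix c d) \/
     (exists s, ichain ext_gen phi s /\ iacceptable s /\ iprefix c s)) /\
  (* (g) *)
  (forall c, fchain ext_inf phi c ->
     exists s, ichain ext_inf phi s /\ iacceptable s /\ iprefix c s) /\
  (* (h) *)
  (forall c, fchain ext_fin phi c ->
     exists d, fchain ext_fin phi d /\ facceptable d /\ fprefix c d).
Proof.
  split; [|split].
  - intros c Hc. destruct (fin_atoms ext_gen phi) as [A [HA HD]].
    destruct (list_eq_dec (list_eq_dec form_eq_dec) c []) as [->|Hcn].
    { left. exists []. split; [apply fchain_nil|split; [apply facc_nil| exists []; auto]]. }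
    destruct (classic (exists d, fchain ext_gen phi d /\ fprefix c d /\ d <> [] /\
                 In (Next ffalse) (lst d))) as [[d [Hd1 [Hd2 [Hd3 Hd4]]]]|Hn].
    + left. exists d. split; auto. split; auto. eapply terminal; eauto.
    + right. apply (INF _ _ A HA HD c Hc Hcn). intros d H1 H2 H3 H4. apply Hn; eauto 10.
  - intros c Hc. destruct (fin_atoms ext_inf phi) as [A [HA HD]].
    assert (Hyp: forall V, atom ext_inf phi V -> ~ In (Next ffalse) V).
    { intros V HV HIn. eapply (atom_not_both _ phi V (Next ffalse) HV HIn).
      apply (atom_deduce ext_inf phi); auto. right. exists (Next ffalse). split; auto. apply clp_nf.
      assert (prov ext_inf (Neg (Next ffalse))) by (apply Ax_Ext; reflexivity).
      pc [Neg (Next ffalse)]. bsolve. }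
    destruct (list_eq_dec (list_eq_dec form_eq_dec) c []) as [->|Hcn].
    + destruct A as [|U A'].
      { exfalso. apply inf_consistent. exact HD. }
      destruct (INF _ _ (U :: A') HA HD [U] (fchain_single _ _ _ (HA U (or_introl eq_refl))) ltac:(discriminate))
        as [s [H1 [H2 H3]]].
      { intros d H1 H2 H3. apply Hyp. apply lst_atom; auto. }
      exists s. split; auto. split; auto. intros i Hi; simpl in Hi; lia.
    + apply (INF _ _ A HA HD c Hc Hcn). intros d H1 H2 H3. apply Hyp. apply lst_atom; auto.
  - intros c Hc. destruct (fin_atoms ext_fin phi) as [A [HA HD]].
    destruct (list_eq_dec (list_eq_dec form_eq_dec) c []) as [->|Hcn].
    { exists []. split; [apply fchain_nil|split; [apply facc_nil| exists []; auto]]. }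
    assert (HL: atom ext_fin phi (lst c)) by (apply lst_atom; auto).
    assert (Hu: In (Until ftrue (Next ffalse)) (lst c)).
    { apply (atom_deduce ext_fin phi); auto. left. apply Cl_fin.
      assert (prov ext_fin (Until ftrue (Next ffalse))) by (apply Ax_Ext; reflexivity).
      pc [Until ftrue (Next ffalse)]. bsolve. }
    destruct (E _ _ _ HA HD (lst c) _ _ HL Hu) as [p [Hp [Hb _]]].
    exists (c ++ p). assert (Hcp: fchain ext_fin phi (c ++ p)) by (apply fchain_app; auto).
    split; auto. split; [|exists p; auto].
    apply (terminal ext_fin phi); auto. destruct c; [congruence|discriminate].
    rewrite lst_app; auto.
Qed.
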